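(* If the communication graph of a system is a tree, then (for any assignment of directions giving adjacent circles opposite directions) there is a single ring.
   Context: A system consists of pairwise disjoint unit circles $C_1,\dots,C_N$ in the plane and a communication range $r>0$; its communication graph $G$ has the circles as vertices, $C_i,C_j$ adjacent iff the distance between their centres is at most $2+r$. For an edge $(i,j)$, the link position $\phi_{ij}$ is the point of $C_i$ closest to $C_j$. A direction assignment gives each circle $C$ a direction $g(C)\in\{1,-1\}$ (counterclockwise/clockwise) with $g(C_i)=-g(C_j)$ for adjacent circles. Rings. Trace a point moving along a circle $C_i$ in direction $g(C_i)$; whenever it reaches a link position $\phi_{ij}$ of its current circle, it passes to $C_j$ at $\phi_{ji}$ and continues along $C_j$ in direction $g(C_j)$ (the motion of a robot that never meets anyone). This motion is periodic and the closed curve traced is a ring; every arc between consecutive link positions of a circle belongs to exactly one ring, so the circles decompose into rings overlapping only at link positions. *)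

(* Defs.v *)
From mathcomp Require Import all_boot all_order all_algebra.
From mathcomp Require Import classical_sets reals trigo.
Set Implicit Arguments. Unset Strict Implicit. Unset Printing Implicit Defensive.
Import Order.TTheory GRing.Theory Num.Theory.
Local Open Scope ring_scope.

Section Rings.
Variable R : realType.

Definition plane_pt := (R * R)%type.

Definition dist (p q : plane_pt) : R :=
  Num.sqrt ((p.1 - q.1) ^+ 2 + (p.2 - q.2) ^+ 2).

(* A system: N unit circles C_i with centres c i, communication range r. *)
Variables (N : nat) (c : 'I_N -> plane_pt) (r : R).

Definition disjoint_unit_circles : Prop :=
  forall i j : 'I_N, i != j -> 2 < dist (c i) (c j).

Definition adj : rel 'I_N :=
  fun i j => (i != j) && (dist (c i) (c j) <= 2 + r).

Definition is_tree : Prop :=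
  (forall i j : 'I_N, connect adj i j) /\
  (forall p : seq 'I_N, uniq p -> (2 < size p)%N -> ~~ cycle adj p).

Definition on_circle (i : 'I_N) (x : plane_pt) : Prop := dist x (c i) = 1.

(* Link position phi_ij: the plane_pt of C_i closest to C_j. *)
Definition link_pos (i j : 'I_N) : plane_pt :=
  let d := dist (c i) (c j) in
  ((c i).1 + ((c j).1 - (c i).1) / d, (c i).2 + ((c j).2 - (c i).2) / d).

Definition is_link (i : 'I_N) (y : plane_pt) : Prop :=
  exists j, adj i j /\ y = link_pos i j.

(* Direction assignment g : each g i is 1 (ccw) or -1 (cw), opposite on edges. *)
Variable g : 'I_N -> R.

Definition direction_assignment : Prop :=
  (forall i, g i = 1 \/ g i = -1) /\ (forall i j, adj i j -> g i = - g j).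

Definition move (i : 'I_N) (x : plane_pt) (t : R) : plane_pt :=
  let a := g i * t in
  let u := x.1 - (c i).1 in let v := x.2 - (c i).2 in
  ((c i).1 + cos a * u - sin a * v, (c i).2 + sin a * u + cos a * v).

Definition free_run (i : 'I_N) (x : plane_pt) (t : R) : Prop :=
  forall t', 0 < t' < t -> ~ is_link i (move i x t').

(* Points (circle, position) from which the robot (started at x0 on C_i0)
   departs along its current circle: the start, and every phi_ji reached by
   passing from C_i to C_j at the first link position phi_ij met on C_i. *)
Inductive departs (i0 : 'I_N) (x0 : plane_pt) : 'I_N -> plane_pt -> Prop :=
  | departs_start : departs i0 x0 i0 x0
  | departs_jump (i : 'I_N) (x : plane_pt) (t : R) (j : 'I_N) :
      departs i0 x0 i x -> 0 < t -> free_run i x t -> adj i j ->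
      move i x t = link_pos i j -> departs i0 x0 j (link_pos j i).

Definition ring_of (i0 : 'I_N) (x0 : plane_pt) : set plane_pt :=
  [set y | exists (i : 'I_N) (x : plane_pt) (t : R),
      departs i0 x0 i x /\ 0 <= t /\ free_run i x t /\ y = move i x t].

End Rings.

(* Main.v *)
Require Import Defs.
From mathcomp Require Import all_boot all_order all_algebra.
From mathcomp Require Import classical_sets reals trigo.
From mathcomp Require Import ring lra.
Import Order.TTheory GRing.Theory Num.Theory.
Local Open Scope ring_scope.

Set Implicit Arguments. Unset Strict Implicit. Unset Printing Implicit Defensive.

Section Geo.
Variable R : realType.

Lemma sqrt_eq1 (a : R) : 0 <= a -> (Num.sqrt a = 1 <-> a = 1).
Proof.
move=> a0; split=> [h|->]; last exact: sqrtr1.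
by rewrite -(sqr_sqrtr a0) h expr1n.
Qed.

Lemma cos_eq1_0 (a : R) : cos a = 1 -> - (pi *+ 2) < a < pi *+ 2 -> a = 0.
Proof.
have pi0 := @pi_gt0 R.
wlog a0 : a / 0 <= a.
  move=> W h hr; case: (leP 0 a) => [|an]; first by move=> a0; exact: W.
  have : - a = 0 by apply: (W (- a)); [lra| rewrite cosN| lra].
  by move/eqP; rewrite oppr_eq0 => /eqP.
move=> ca hr.
have c0 : cos (0:R) = 1 by rewrite cos0.
case: (leP a pi) => api.
  apply: (@cos_inj R); rewrite ?in_itv /= ?a0 ?api ?lexx ?pi_ge0 //; by rewrite ca c0.
exfalso.
have h2 : cos (pi *+ 2 - a) = 1 by rewrite cosB cos2pi sin2pi ca; lra.
have : pi *+ 2 - a = 0.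
  apply: (@cos_inj R); rewrite ?in_itv /= ?lexx ?pi_ge0 //; last by rewrite h2 c0.
  apply/andP; split; lra.
lra.
Qed.

Lemma angle_ex (u v : R) : u ^+ 2 + v ^+ 2 = 1 ->
  exists a, 0 <= a < pi *+ 2 /\ cos a = u /\ sin a = v.
Proof.
move=> h.
have pi0 := @pi_gt0 R.
have u1 : -1 <= u <= 1.
  have : u ^+ 2 <= 1 by rewrite -h lerDl sqr_ge0.
  move=> hu; apply/andP; split; nra.
have su : Num.sqrt (1 - u ^+ 2) = `|v| by rewrite -h addrAC subrr add0r sqrtr_sqr.
case: (leP 0 v) => v0.
  exists (acos u); split; [apply/andP; split|split].
  - exact: acos_ge0.
  - have := acos_lepi u1; lra.
  - by apply: acosK; rewrite in_itv.
  - by rewrite sin_acos // su ger0_norm.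
exists (pi *+ 2 - acos u); split; [apply/andP; split|split].
- have := acos_lepi u1; lra.
- have : 0 < acos u.
    apply: acos_gt0; case/andP: u1 => -> u1 /=; nra.
  lra.
- by rewrite cosB cos2pi sin2pi mul1r mul0r addr0 acosK // in_itv.
- rewrite sinB cos2pi sin2pi mul1r mul0r sub0r sin_acos // su ltr0_norm //.
  by rewrite opprK.
Qed.


Variables (N : nat) (c : 'I_N -> plane_pt R) (r : R) (g : 'I_N -> R).
Hypothesis hg : forall m, g m = 1 \/ g m = -1.

Lemma on_circleE m (x : plane_pt R) :
  on_circle c m x <-> (x.1 - (c m).1) ^+ 2 + (x.2 - (c m).2) ^+ 2 = 1.
Proof. by rewrite /on_circle /dist; apply: sqrt_eq1; rewrite addr_ge0 // sqr_ge0. Qed.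

Lemma move_add m x s t : move c g m (move c g m x s) t = move c g m x (s + t).
Proof.
rewrite /move /= [g m * (s + t)]mulrDr cosD sinD; congr pair; ring.
Qed.

Lemma move0 m x : move c g m x 0 = x.
Proof. by case: x => a b; rewrite /move /= mulr0 cos0 sin0; congr pair; ring. Qed.

Lemma move_2pi m x : move c g m x (pi *+ 2) = x.
Proof.
case: x => a b; rewrite /move /=.
have [-> | ->] := hg m.
  by rewrite mul1r cos2pi sin2pi; congr pair; ring.
by rewrite mulN1r cosN sinN cos2pi sin2pi; congr pair; ring.
Qed.

Lemma move_circle m x t : on_circle c m x -> on_circle c m (move c g m x t).
Proof.
rewrite !on_circleE /move /= => h.
set a := g m * t; set u := x.1 - (c m).1; set v := x.2 - (c m).2.
have -> : ((c m).1 + cos a * u - sin a * v - (c m).1) ^+ 2 +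
  ((c m).2 + sin a * u + cos a * v - (c m).2) ^+ 2 =
  (cos a ^+ 2 + sin a ^+ 2) * (u ^+ 2 + v ^+ 2) by ring.
by rewrite cos2Dsin2 mul1r.
Qed.

Lemma move_fix m x a : on_circle c m x -> move c g m x a = x ->
  - (pi *+ 2) < a < pi *+ 2 -> a = 0.
Proof.
case: x => x1 x2; rewrite on_circleE /move /= => h [e1 e2] ha.
set t := g m * a in e1 e2.
set u := x1 - (c m).1 in e1 e2 h; set v := x2 - (c m).2 in e1 e2 h.
have hu : u = x1 - (c m).1 by [].
have hv : v = x2 - (c m).2 by [].
have ht : t = g m * a by [].
clearbody u v t.
have E1 : cos t * u - sin t * v = u by rewrite [in RHS]hu -e1; ring.
have E2 : sin t * u + cos t * v = v by rewrite [in RHS]hv -e2; ring.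
have ct : cos t = 1.
  have : cos t * (u ^+ 2 + v ^+ 2) = u ^+ 2 + v ^+ 2.
    have -> : cos t * (u ^+ 2 + v ^+ 2) =
      u * (cos t * u - sin t * v) + v * (sin t * u + cos t * v) by ring.
    by rewrite E1 E2; ring.
  by rewrite h mulr1.
have : t = 0.
  apply: cos_eq1_0 => //; rewrite ht; have [-> | ->] := hg m; lra.
rewrite ht; have [-> | ->] := hg m; lra.
Qed.

Lemma move_uniq m x s t : on_circle c m x -> move c g m x s = move c g m x t ->
  - (pi *+ 2) < s - t < pi *+ 2 -> s = t.
Proof.
move=> h e hst.
have : s - t = 0.
  apply: (@move_fix m (move c g m x t)) => //; first exact: move_circle.
  by rewrite move_add addrC subrK.
lra.
Qed.

Lemma move_ex m x y : on_circle c m x -> on_circle c m y ->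
  exists t, 0 <= t < pi *+ 2 /\ move c g m x t = y.
Proof.
rewrite !on_circleE => hx hy.
have pi0 := @pi_gt0 R.
have [al [hal [ca sa]]] := angle_ex hx.
have [be [hbe [cb sb]]] := angle_ex hy.
have gg : g m * g m = 1 by have [-> | ->] := hg m; lra.
have key : forall t, g m * t = be - al -> move c g m x t = y.
  move=> t ht; rewrite /move ht.
  case: y hy cb sb => y1 y2 /= hy cb sb.
  rewrite -ca -sa; congr pair.
    by rewrite -addrA -cosD subrK cb; ring.
  by rewrite -addrA -sinD subrK sb; ring.
have e0 : g m * (g m * (be - al)) = be - al by rewrite mulrA gg mul1r.
case: (leP 0 (g m * (be - al))) => h0.
  exists (g m * (be - al)); split; last exact: key.
  apply/andP; split => //; have [hgm | hgm] := hg m; rewrite hgm in h0 *; lra.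
exists (g m * (be - al) + pi *+ 2); split.
  apply/andP; split; have [hgm | hgm] := hg m; rewrite hgm in h0 *; lra.
by rewrite -move_add move_2pi key.
Qed.

End Geo.

Section Main.
Variables (R : realType) (N : nat) (c : 'I_N -> plane_pt R) (r : R) (g : 'I_N -> R).
Hypothesis hdis : disjoint_unit_circles c.
Hypothesis hdir : direction_assignment c r g.
Hypothesis htree : is_tree c r.

Local Notation A := (adj c r).
Local Notation L := (link_pos c).

Lemma hg : forall m, g m = 1 \/ g m = -1.
Proof. exact: hdir.1. Qed.

Lemma distC (p q : plane_pt R) : dist p q = dist q p.
Proof. by rewrite /dist; congr Num.sqrt; ring. Qed.

Lemma adjC i j : A i j = A j i.
Proof. by rewrite /adj eq_sym distC. Qed.

Lemma adj_neq i j : A i j -> i != j.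
Proof. by case/andP. Qed.

Lemma link_circle i j : A i j -> on_circle c i (L i j).
Proof.
move=> hij; have d2 := hdis (adj_neq hij).
rewrite on_circleE /link_pos /=.
set d := dist (c i) (c j) in d2 *.
have dS : d ^+ 2 = ((c j).1 - (c i).1) ^+ 2 + ((c j).2 - (c i).2) ^+ 2.
  rewrite /d /dist sqr_sqrtr ?addr_ge0 ?sqr_ge0 //; ring.
have dn0 : d != 0 by apply/eqP => d0; move: d2; rewrite d0; lra.
have -> : (c i).1 + ((c j).1 - (c i).1) / d - (c i).1 = ((c j).1 - (c i).1) / d by ring.
have -> : (c i).2 + ((c j).2 - (c i).2) / d - (c i).2 = ((c j).2 - (c i).2) / d by ring.
rewrite !expr_div_n -mulrDl -dS divff //.
by rewrite expf_neq0.
Qed.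


Definition avoid (m : 'I_N) : rel 'I_N := fun a b => [&& A a b, a != m & b != m].
Definition sub (n m : 'I_N) : {set 'I_N} := [set a | connect (avoid m) n a].

Lemma path_avoid m x p : path (avoid m) x p -> all (fun y => y != m) p.
Proof.
elim: p x => [|y p IH] x //= /andP [/and3P [_ _ ym] hp].
by rewrite ym (IH y).
Qed.

Lemma avoid_adj m : subrel (avoid m) A.
Proof. by move=> a b /and3P []. Qed.

Lemma no_back n m c0 : A n m -> A n c0 -> c0 != m -> ~~ connect (avoid n) c0 m.
Proof.
move=> hnm hnc hcm; apply/negP => /connectP [p hp em].
move: em; case/shortenP: hp => p' hp' hu _ em.
have hall := path_avoid hp'.
have cn : c0 != n by rewrite eq_sym adj_neq.
have : ~~ cycle A [:: n, c0 & p'].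
  apply: htree.2; last by case: p' hall hp' hu em => //= *; subst; rewrite ?eqxx in hcm.
  rewrite cons_uniq hu andbT.
  rewrite inE negb_or eq_sym cn /=.
  by apply/negP => hin; move/allP: hall => /(_ _ hin); rewrite eqxx.
case: p' hall hp' hu em => [|y q] hall hp' hu em.
  by move: hcm; rewrite em /= eqxx.
have /= /andP [h1 h2] := sub_path (@avoid_adj n) hp'.
by move: em => /= em; rewrite rcons_path /= h1 h2 /= -em hnc adjC hnm.
Qed.


Lemma sub_incl n m c0 : A n m -> A n c0 -> c0 != m -> sub c0 n \subset sub n m.
Proof.
move=> hnm hnc hcm; apply/fintype.subsetP => a; rewrite !inE => /connectP [p hp ->].
have nm : n != m by apply: adj_neq.
have key : forall q x, connect (avoid n) c0 x -> path (avoid n) x q ->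
    connect (avoid m) n x -> connect (avoid m) n (last x q).
  elim=> [|y q IH] x //= cx /andP [exy hq] nx.
  have cy : connect (avoid n) c0 y := connect_trans cx (connect1 exy).
  apply: (IH y cy hq); apply: (connect_trans nx); apply: connect1.
  case/and3P: exy => axy _ _; rewrite /avoid axy /=.
  apply/andP; split; apply/eqP => e; subst.
  - by move: (no_back hnm hnc hcm); rewrite cx.
  - by move: (no_back hnm hnc hcm); rewrite cy.
apply: key hp _ => //; apply: connect1; by rewrite /avoid hnc nm.
Qed.

Lemma sub_self n m : n \in sub n m.
Proof. by rewrite inE connect0. Qed.

Lemma notin_sub n c0 : c0 != n -> n \notin sub c0 n.
Proof.
move=> cn; rewrite inE; apply/negP => /connectP [p hp e].
have := path_avoid hp.
case/lastP: p hp e => [|q y] hp e; first by rewrite /= e eqxx in cn.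
rewrite last_rcons in e; subst y.
by rewrite all_rcons eqxx.
Qed.

Lemma card_sub_lt n m c0 : A n m -> A n c0 -> c0 != m -> (#|sub c0 n| < #|sub n m|)%N.
Proof.
move=> hnm hnc hcm; apply: proper_card; apply/fintype.properP; split.
  exact: sub_incl.
exists n; first exact: sub_self.
by apply: notin_sub; rewrite eq_sym adj_neq.
Qed.

Lemma decomp_gen (e : rel 'I_N) n a p : subrel e A -> path e n p -> a = last n p ->
  a != n -> exists c0, [/\ A n c0, e n c0 & a \in sub c0 n].
Proof.
move=> seA hp ea an.
move: ea; case/shortenP: hp => p' hp' hu _ ea.
case: p' hp' hu ea => [|c0 q] /= hp' hu ea; first by rewrite ea eqxx in an.
case/andP: hp' => enc hq.
exists c0; split => //; first exact: seA.
rewrite inE; apply/connectP; exists q => //.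
apply: (sub_in_path (e := e) (P := [pred y | y != n])).
- move=> x y; rewrite !inE => xn yn exy; apply/and3P; split => //; exact: seA.
- case/and3P: hu => nin _ _.
  apply/allP => y hy; apply/eqP => yn; subst y; by rewrite hy in nin.
- exact: hq.
Qed.


Section Run.
Variables (i0 : 'I_N) (x0 : plane_pt R).
Hypothesis hx0 : on_circle c i0 x0.
Local Notation D := (departs c r g i0 x0).

Lemma D_circle m z : D m z -> on_circle c m z.
Proof.
elim=> [|i x t j _ _ _ _ hij _]; first exact: hx0.
by apply: link_circle; rewrite adjC.
Qed.

Lemma circle_lemma n z0 : D n z0 ->
  (forall b, A n b -> D b (L b n) -> D n (L n b)) ->
  forall b, A n b -> D b (L b n).
Proof.
move=> hz hret.
have hc := D_circle hz.
have pi0 := @pi_gt0 R.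
pose T := fun b => xget 0 [set t | 0 < t <= pi *+ 2 /\ move c g n z0 t = L n b].
have Tspec : forall b, A n b -> 0 < T b <= pi *+ 2 /\ move c g n z0 (T b) = L n b.
  move=> b hb; rewrite /T; apply: (@xgetPex _ 0 [set t | 0 < t <= pi *+ 2 /\ move c g n z0 t = L n b]).
  have [t [/andP [t0 t2] ht]] := move_ex hg hc (link_circle hb).
  case: (eqVneq t 0) => [e|tn0].
    exists (pi *+ 2); split; first by apply/andP; split; lra.
    by rewrite (move_2pi c hg); rewrite e move0 in ht.
  exists t; split => //; apply/andP; split; last lra.
  by rewrite lt_neqAle eq_sym tn0 t0.
have Tuniq : forall b t, A n b -> 0 < t <= pi *+ 2 -> move c g n z0 t = L n b -> t = T b.
  move=> b t hb /andP [ht1 ht2] e; have [/andP [hT1 hT2] eT] := Tspec b hb.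
  apply: (move_uniq hg hc); first by rewrite e eT.
  apply/andP; split; lra.
clearbody T.
have step : forall b, A n b ->
    (forall b', A n b' -> T b' < T b -> D b' (L b' n)) -> D b (L b n).
  move=> b hb IH.
  have [/andP [Tb0 Tb2] eTb] := Tspec b hb.
  case: (pickP [pred b' | A n b' && (T b' < T b)]) => [b0 hb0 | none].
  - have [b1 /= /andP [hb1 lt1] hmax] :=
      arg_maxP (P := [pred b' | A n b' && (T b' < T b)]) T hb0.
    have [/andP [T10 T12] eT1] := Tspec b1 hb1.
    have hd1 : D n (L n b1) := hret b1 hb1 (IH b1 hb1 lt1).
    apply: (departs_jump (t := T b - T b1)) hd1 _ _ hb _.
    + by rewrite subr_gt0.
    + move=> t' /andP [t'0 t'1] [j [hj ej]].
      rewrite -eT1 move_add in ej.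
      have eTj := Tuniq j (T b1 + t') hj (ltac:(apply/andP; split; lra)) ej.
      have := hmax j; rewrite /= hj /=.
      have -> : T j < T b by rewrite -eTj; lra.
      move=> /(_ isT); rewrite -eTj; lra.
    + by rewrite -eT1 move_add addrC subrK.
  - apply: (departs_jump (t := T b)) hz _ _ hb eTb => //.
    move=> t' /andP [t'0 t'1] [j [hj ej]].
    have eTj := Tuniq j t' hj (ltac:(apply/andP; split; lra)) ej.
    have := none j; rewrite /= hj /= -eTj t'1 //.
have main : forall k b, A n b ->
    (#|[set b' | A n b' && (T b' < T b)%R]| <= k)%N -> D b (L b n).
  elim=> [|k IHk] b hb hk.
  - apply: step hb _ => b' hb' lt; exfalso.
    move: hk; rewrite leqn0 cards_eq0 => /eqP E.
    have : b' \in [set b'0 | A n b'0 && (T b'0 < T b)] by rewrite inE hb' lt.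
    by rewrite E inE.
  - apply: step hb _ => b' hb' lt; apply: (IHk b' hb').
    rewrite -ltnS; apply: leq_trans hk; apply: proper_card; apply/fintype.properP; split.
      apply/fintype.subsetP => x; rewrite !inE => /andP [-> h] /=.
      exact: lt_trans h lt.
    exists b'; first by rewrite inE hb' lt. by rewrite inE ltxx andbF.
by move=> b hb; apply: main _ b hb (leqnn _).
Qed.



Lemma sweep k : forall n m, (#|sub n m| <= k)%N -> A n m -> D n (L n m) ->
  (forall a, a \in sub n m -> forall b, A a b -> D a (L a b)) /\ D m (L m n).
Proof.
elim: k => [|k IH] n m hk hnm hd.
  by move: hk; rewrite leqn0 cards_eq0 => /eqP E; move: (sub_self n m); rewrite E inE.
have hret : forall b, A n b -> D b (L b n) -> D n (L n b).
  move=> b hb hdb; case: (eqVneq b m) => [->|bm]; first exact: hd.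
  have hk' : (#|sub b n| <= k)%N.
    by rewrite -ltnS; apply: leq_trans hk; exact: card_sub_lt.
  have hbn : A b n by rewrite adjC.
  exact: (IH b n hk' hbn hdb).2.
have hall := circle_lemma hd hret.
split; last exact: hall.
move=> a ha b hab.
case: (eqVneq a n) => [ean | an].
  by subst a; apply: hret hab (hall b hab).
move: ha; rewrite inE => /connectP [p hp ea].
have [c0 [hnc /and3P [_ _ cm] hin]] := decomp_gen (@avoid_adj m) hp ea an.
have hk' : (#|sub c0 n| <= k)%N.
  by rewrite -ltnS; apply: leq_trans hk; exact: card_sub_lt.
have hcn : A c0 n by rewrite adjC.
exact: (IH c0 n hk' hcn (hall c0 hnc)).1 a hin b hab.
Qed.

Lemma all_darts a b : A a b -> D a (L a b).
Proof.
have h0 : D i0 x0 by constructor.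
have hret : forall b, A i0 b -> D b (L b i0) -> D i0 (L i0 b).
  move=> b' hb hdb; have hbi : A b' i0 by rewrite adjC.
  exact: (sweep (leqnn _) hbi hdb).2.
have hall := circle_lemma h0 hret.
move=> hab; case: (eqVneq a i0) => [ea | an].
  by subst a; apply: hret hab (hall b hab).
have /connectP [p hp ea] := htree.1 i0 a.
have [c0 [hnc _ hin]] := decomp_gen (e := A) (fun _ _ h => h) hp ea an.
have hci : A c0 i0 by rewrite adjC.
exact: (sweep (leqnn _) hci (hall c0 hnc)).1 a hin b hab.
Qed.

Lemma ring_eq : ring_of c r g i0 x0 = (fun y : plane_pt R => exists m, on_circle c m y).
Proof.
have pi0 := @pi_gt0 R.
apply/seteqP; split.
  move=> y [m [z [t [hd [t0 [hf ->]]]]]]; exists m; apply: move_circle.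
  exact: D_circle hd.
move=> y [m hy].
case: (pickP (A m)) => [k0 hk0 | none].
  pose tau := fun k => xget 0 [set t | 0 <= t < pi *+ 2 /\ move c g m (L m k) t = y].
  have tauspec : forall k, A m k -> 0 <= tau k < pi *+ 2 /\ move c g m (L m k) (tau k) = y.
    move=> k hk; rewrite /tau.
    apply: (@xgetPex _ 0 [set t | 0 <= t < pi *+ 2 /\ move c g m (L m k) t = y]).
    have [t ht] := move_ex hg (link_circle hk) hy; by exists t.
  clearbody tau.
  have [k hk hmin] := arg_minP (P := A m) tau hk0.
  have [/andP [tk0 tk2] ek] := tauspec k hk.
  exists m, (L m k), (tau k); split; first exact: all_darts.
  split => //; split; last by rewrite ek.
  move=> t' /andP [t'0 t'1] [j [hj ej]].
  have [/andP [tj0 tj2] ej'] := tauspec j hj.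
  have e2 : move c g m (L m j) (tau k - t') = y.
    by rewrite -ej move_add addrC subrK.
  have eq : tau j = tau k - t'.
    apply: (move_uniq hg (link_circle hj)); first by rewrite ej' e2.
    apply/andP; split; lra.
  have := hmin j hj; rewrite eq; lra.
have mi : m = i0.
  apply/eqP; rewrite eq_sym; apply/negP => /negP im.
  have /connectP [p hp em] := htree.1 i0 m.
  move: hp em; case/lastP: p => [|q z] hp em.
    by rewrite /= in em; rewrite em eqxx in im.
  rewrite last_rcons in em; subst z.
  move: hp; rewrite rcons_path => /andP [_ hl].
  by move: (none (last i0 q)); rewrite /= adjC hl.
subst m.
have [t [/andP [t0 t2] ht]] := move_ex hg hx0 hy.
exists i0, x0, t; split; first by constructor.
split => //; split => //.
move=> t' _ [j [hj _]].
by move: (none j); rewrite /= hj.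
Qed.

End Run.

End Main.

Theorem lemma12 (R : realType) (N : nat) (c : 'I_N -> plane_pt R) (r : R)
    (g : 'I_N -> R) :
  0 < r ->
  disjoint_unit_circles c ->
  direction_assignment c r g ->
  is_tree c r ->
  forall (i : 'I_N) (x : plane_pt R) (j : 'I_N) (y : plane_pt R),
    on_circle c i x -> on_circle c j y ->
    ring_of c r g i x = ring_of c r g j y.
Proof.
move=> _ hd hdr ht i x j y hx hy.
by rewrite (ring_eq hd hdr ht hx) (ring_eq hd hdr ht hy).
Qed.
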